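(* In the setting described in the context, let $M(f,g)=E\big(\langle f,T_{s(Y)}g\rangle^2_{\mathcal H_U}\big)$. The minimization defining the CP-sequence of $s(Y)$ is equivalent to the following sequence of maximization problems: Step 1: maximize $M(f,g)$ subject to $\|f\|_{\mathcal H_U}=1$ and $\|g\|_{\mathcal H_V}=1$; Step $k$ ($k=2,\ldots,d$): maximize $M(f,g)$ subject to $\|f\|_{\mathcal H_U}=1$, $\langle f,f_i\rangle_{\mathcal H_U}=0$ for $i=1,\ldots,k-1$, $\|g\|_{\mathcal H_V}=1$, $\langle g,g_i\rangle_{\mathcal H_V}=0$ for $i=1,\ldots,k-1$, where $(f_i,g_i)$, $i=1,\ldots,k-1$, are the solutions obtained in Steps $1$ through $k-1$.
   Context: Let $(\Omega,\mathcal F,P)$ be a probability space, $X:\Omega\to\mathbb R^{p\times q}$ a random matrix, $Y$ a random element of a measurable space $\Omega_Y$ with distribution $P_Y$, $r=\min(p,q)$. Assume with probability one: $\operatorname{rank}X=r$; the first components of the left and right singular vectors of $X$ are nonzero; the nonzero singular values of $X$ are simple. For $x\in\mathbb R^{p\times q}$ write $x=\sum_{i=1}^r\lambda_i(x)U_i^0(x)V_i^0(x)^\top$ (SVD, $\lambda_i(x)>0$, first component of $U_i^0(x)$ positive) and set $U_i(x)=\lambda_i(x)^{1/2}U_i^0(x)$, $V_i(x)=\lambda_i(x)^{1/2}V_i^0(x)$. Let $\kappa_U,\kappa_V,\kappa_Y$ be positive definite kernels on $\mathbb R^p,\mathbb R^q,\Omega_Y$; $\mathcal H_U,\mathcal H_V,\mathcal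 H_Y$ are the subspaces of their RKHSs spanned by centered kernel functions $\kappa_U(\cdot,u)-E\kappa_U(\cdot,U)$, $\kappa_V(\cdot,v)-E\kappa_V(\cdot,V)$, $\kappa_Y(\cdot,y)-E\kappa_Y(\cdot,Y)$ (Bochner means). $\mathcal H_U\otimes\mathcal H_V$ is the completion of $\operatorname{span}\{fg\}$, $fg(u,v)=f(u)g(v)$, with $\langle f_1g_1,f_2g_2\rangle_\otimes=\langle f_1,f_2\rangle_{\mathcal H_U}\langle g_1,g_2\rangle_{\mathcal H_V}$. Feature map $F(X)=\sum_{i=1}^r[\kappa_U(\cdot,U_i(X))-E\kappa_U(\cdot,U_i(X))][\kappa_V(\cdot,V_i(X))-E\kappa_V(\cdot,V_i(X))]$. For Hilbert spaces, $h_1\otimes h_2$ is the operator $g\mapsto h_1\langle h_2,g\rangle$. Assume $E\|F(X)\|_\otimes^2<\infty$, $E[\kappa_Y(Y,Y)]<\infty$; $\Sigma_{FF}=E[F(X)\otimes F(X)]-E[F(X)]\otimes E[F(X)]$, $\Sigma_{FY}=E[F(X)\otimes(\kappa_Y(\cdot,Y)-E\kappa_Y(\cdot,Y))]$; assume $\operatorname{ran}(\Sigma_{FY})\subseteq\operatorname{ran}(\Sigma_{FF})$; $R_{FY}=\Sigma_{FF}^\dagger\Sigma_{FY}$ where $A^\dagger$ is the inverse of $A|\overline{\operatorname{ran}}(A)$ onto $\operatorname{ran}(A)$; $s(Y)=R_{FY}[\kappa_Y(\cdot,Y)-E\kappa_Y(\cdot,Y)]$. For $\rho\in\mathcal H_U\otimes\mathcal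 H_V$, $T_\rho:\mathcal H_V\to\mathcal H_U$ is the unique bounded linear operator with $\langle f,T_\rho g\rangle_{\mathcal H_U}=\langle fg,\rho\rangle_\otimes$. Define $L(f,g)=\min_{u\in L_2(P_Y)}E\|s(Y)-u(Y)fg\|_\otimes^2$. The CP-sequence of $s(Y)$ is defined recursively: $(f_1,g_1)$ minimizes $L$ over $\mathcal H_U\times\mathcal H_V$; for $k\ge2$, $(f_k,g_k)$ minimizes $L$ over $(\operatorname{span}\{f_1,\ldots,f_{k-1}\})^\perp\times(\operatorname{span}\{g_1,\ldots,g_{k-1}\})^\perp$. Here $d$ denotes the number of steps of the CP-sequence considered, namely $d=\min\{k: L(f_\ell,g_\ell)=0\text{ for all }\ell\ge k\}$. *)

(* Defs.v *)
From HB Require Import structures.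
From mathcomp Require Import all_boot all_order all_algebra.
From mathcomp Require Import all_classical all_reals all_analysis.
Set Implicit Arguments. Unset Strict Implicit. Unset Printing Implicit Defensive.
Import Order.TTheory GRing.Theory Num.Theory.
Local Open Scope classical_set_scope.
Local Open Scope ring_scope.

Record inner_space (R : realType) (V : lmodType R) := InnerSpace {
  ip : V -> V -> R;
  ip_sym : forall x y, ip x y = ip y x;
  ip_linl : forall (a : R) x y z, ip (a *: x + y) z = a * ip x z + ip y z;
  ip_ge0 : forall x, 0 <= ip x x;
  ip_eq0 : forall x, ip x x = 0 -> x = 0
}.

Section InnerDefs.
Variables (R : realType) (V : lmodType R) (I : inner_space V).

Definition inorm (x : V) : R := Num.sqrt (ip I x x).

Definition icauchy (u : nat -> V) : Prop :=
  forall e : R, 0 < e -> exists N : nat, forall m n : nat,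
    (N <= m)%N -> (N <= n)%N -> inorm (u m - u n) < e.

Definition iconverges (u : nat -> V) : Prop :=
  exists l : V, forall e : R, 0 < e -> exists N : nat, forall n : nat,
    (N <= n)%N -> inorm (u n - l) < e.

Definition icomplete : Prop := forall u, icauchy u -> iconverges u.

Definition orth_prev (xs : nat -> V) (k : nat) (x : V) : Prop :=
  forall i : nat, (i < k)%N -> ip I x (xs i) = 0.

Definition unit_vec (x : V) : Prop := inorm x = 1.

Definition normalize (x : V) : V := (inorm x)^-1 *: x.
End InnerDefs.

(* W, with the map tens : HU -> HV -> W, (f,g) |-> fg, is the Hilbert tensor
   product HU (x) HV: tens is bilinear, <f1 g1, f2 g2> = <f1,f2><g1,g2>,
   W is complete and the span of the elementary tensors is dense. *)
Definition is_tensor_product (R : realType) (HU HV W : lmodType R)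
  (IU : inner_space HU) (IV : inner_space HV) (IW : inner_space W)
  (tens : HU -> HV -> W) : Prop :=
  [/\ (forall (a : R) f1 f2 g, tens (a *: f1 + f2) g = a *: tens f1 g + tens f2 g),
      (forall (a : R) f g1 g2, tens f (a *: g1 + g2) = a *: tens f g1 + tens f g2),
      (forall f1 g1 f2 g2,
          ip IW (tens f1 g1) (tens f2 g2) = ip IU f1 f2 * ip IV g1 g2),
      icomplete IW &
      (forall (w : W) (e : R), 0 < e -> exists ps : seq (HU * HV),
          inorm IW (w - \sum_(p <- ps) tens p.1 p.2) < e)].

Section Optim.
Variables (R : realType) (HU HV W : lmodType R)
  (IU : inner_space HU) (IV : inner_space HV) (IW : inner_space W)
  (tens : HU -> HV -> W).
Variables (d : measure_display) (OY : measurableType d) (PY : probability OY R).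
Variable s : OY -> W.

Definition L2set : set (OY -> R) :=
  [set u : OY -> R | measurable_fun setT u /\ (\int[PY]_y ((u y) ^+ 2)%:E < +oo)%E].

(* L(f,g) = min_{u in L2(P_Y)} E || s(Y) - u(Y) fg ||^2  (taken as an inf;
   the infimum is attained) *)
Definition cp_cost (f : HU) (g : HV) (u : OY -> R) : \bar R :=
  (\int[PY]_y (ip IW (s y - u y *: tens f g) (s y - u y *: tens f g))%:E)%E.

Definition Lcp (f : HU) (g : HV) : \bar R :=
  ereal_inf (cp_cost f g @` L2set).

(* M(f,g) = E <f, T_{s(Y)} g>^2, where by definition of T_rho,
   <f, T_{s(Y)} g>_{HU} = <fg, s(Y)>_(x). *)
Definition Mcp (f : HU) (g : HV) : \bar R :=
  (\int[PY]_y ((ip IW (tens f g) (s y)) ^+ 2)%:E)%E.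

End Optim.

Definition is_argmin_on (T : Type) (R : realType) (F : T -> \bar R) (S : set T) (x : T) :=
  S x /\ forall y, S y -> (F x <= F y)%E.

Definition is_argmax_on (T : Type) (R : realType) (F : T -> \bar R) (S : set T) (x : T) :=
  S x /\ forall y, S y -> (F y <= F x)%E.

(* Main.v *)
Require Import Defs.
From HB Require Import structures.
From mathcomp Require Import all_boot all_order all_algebra.
From mathcomp Require Import all_classical all_reals all_analysis.
From mathcomp Require Import measurable_realfun.
From mathcomp Require Import ring lra.
Import Order.TTheory GRing.Theory Num.Theory.
Local Open Scope classical_set_scope.
Local Open Scope ring_scope.

Lemma ip0l {R : realType} {V : lmodType R} (I : inner_space V) z : ip I 0 z = 0.
Proof. have := ip_linl I (-1) 0 0 z. by rewrite scaler0 addr0 mulN1r addNr. Qed.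

Lemma ipZl {R : realType} {V : lmodType R} (I : inner_space V) a x z :
  ip I (a *: x) z = a * ip I x z.
Proof. have := ip_linl I a x 0 z. by rewrite addr0 ip0l addr0. Qed.

Lemma ipDl {R : realType} {V : lmodType R} (I : inner_space V) x y z :
  ip I (x + y) z = ip I x z + ip I y z.
Proof. have := ip_linl I 1 x y z. by rewrite scale1r mul1r. Qed.

Lemma ipBl {R : realType} {V : lmodType R} (I : inner_space V) x y z :
  ip I (x - y) z = ip I x z - ip I y z.
Proof. by rewrite ipDl -scaleN1r ipZl mulN1r. Qed.

Lemma ipE {R : realType} {V : lmodType R} (I : inner_space V) x t v :
  ip I (x - v *: t) (x - v *: t) =
  ip I x x - 2 * v * ip I t x + v ^+ 2 * ip I t t.
Proof.
rewrite ipBl ipZl (ip_sym I x (x - v *: t)) (ip_sym I t (x - v *: t)).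
rewrite !ipBl !ipZl (ip_sym I x t). ring.
Qed.

Lemma ip_gt0 {R : realType} {V : lmodType R} (I : inner_space V) x :
  x != 0 -> 0 < ip I x x.
Proof.
move=> hx; rewrite lt_neqAle ip_ge0 andbT eq_sym.
apply: contra hx => /eqP h. apply/eqP; exact: (ip_eq0 h).
Qed.

Lemma inorm_gt0 {R : realType} {V : lmodType R} (I : inner_space V) x :
  x != 0 -> 0 < inorm I x.
Proof. by move=> hx; rewrite /inorm sqrtr_gt0 ip_gt0. Qed.

Lemma normalizeK {R : realType} {V : lmodType R} (I : inner_space V) x :
  x != 0 -> inorm I x *: normalize I x = x.
Proof.
move=> hx; rewrite /normalize scalerA mulfV ?scale1r //.
by rewrite gt_eqF // inorm_gt0.
Qed.

Lemma ip_normalize {R : realType} {V : lmodType R} (I : inner_space V) x :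
  x != 0 -> ip I (normalize I x) (normalize I x) = 1.
Proof.
move=> hx; rewrite /normalize ipZl (ip_sym I) ipZl mulrA.
have hp := ip_gt0 I x hx.
have : (inorm I x) ^+ 2 = ip I x x by rewrite /inorm sqr_sqrtr // ltW.
have hn := inorm_gt0 I x hx.
move=> <-. field. by rewrite gt_eqF.
Qed.

Lemma unit_normalize {R : realType} {V : lmodType R} (I : inner_space V) x :
  x != 0 -> unit_vec I (normalize I x).
Proof. by move=> hx; rewrite /unit_vec /inorm ip_normalize // sqrtr1. Qed.

Lemma normalize_unit {R : realType} {V : lmodType R} (I : inner_space V) x :
  unit_vec I x -> normalize I x = x.
Proof. by rewrite /unit_vec /normalize => ->; rewrite invr1 scale1r. Qed.

Lemma unit_neq0 {R : realType} {V : lmodType R} (I : inner_space V) x :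
  unit_vec I x -> x != 0.
Proof.
rewrite /unit_vec /inorm => h; apply/eqP => hx; move: h.
by rewrite hx ip0l sqrtr0 => /eqP; rewrite eq_sym oner_eq0.
Qed.

Lemma orthZ {R : realType} {V : lmodType R} (I : inner_space V) xs k a x :
  orth_prev I xs k x -> orth_prev I xs k (a *: x).
Proof. by move=> h i hi; rewrite ipZl h // mulr0. Qed.

Lemma orthZ_inv {R : realType} {V : lmodType R} (I : inner_space V) xs k a x :
  a != 0 -> orth_prev I xs k (a *: x) -> orth_prev I xs k x.
Proof.
move=> ha h i hi; have := h i hi; rewrite ipZl => /eqP.
by rewrite mulf_eq0 (negbTE ha) /= => /eqP.
Qed.

Section Meas.
Variables (R : realType) (W : lmodType R) (IW : inner_space W)
  (d : measure_display) (OY : measurableType d) (PY : probability OY R)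
  (s : OY -> W).
Hypotheses (hs_meas : forall w : W, measurable_fun setT (fun y => ip IW (s y) w))
  (hs_nmeas : measurable_fun setT (fun y => ip IW (s y) (s y)))
  (hs_L2 : (\int[PY]_y (ip IW (s y) (s y))%:E < +oo)%E).

Let S := (\int[PY]_y (ip IW (s y) (s y))%:E)%E.

Lemma intS : PY.-integrable setT (EFin \o (fun y => ip IW (s y) (s y))).
Proof.
apply/integrableP; split; first exact/measurable_realfun.measurable_EFinP.
rewrite (eq_integral (fun y => (ip IW (s y) (s y))%:E)) //.
by move=> y _ /=; rewrite ger0_norm // ip_ge0.
Qed.

Lemma meas_c t : measurable_fun setT (fun y => ip IW t (s y)).
Proof.
have -> : (fun y => ip IW t (s y)) = (fun y => ip IW (s y) t).
  by apply/funext => y; rewrite ip_sym.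
exact: hs_meas.
Qed.

Lemma h_eq t (ht : ip IW t t = 1) x :
  ip IW (x - ip IW t x *: t) (x - ip IW t x *: t) = ip IW x x - (ip IW t x) ^+ 2.
Proof. rewrite ipE ht; ring. Qed.

Lemma c2_le t (ht : ip IW t t = 1) x : (ip IW t x) ^+ 2 <= ip IW x x.
Proof. have := ip_ge0 IW (x - ip IW t x *: t); rewrite h_eq //; lra. Qed.

Lemma int_c2 t (ht : ip IW t t = 1) :
  PY.-integrable setT (EFin \o (fun y => (ip IW t (s y)) ^+ 2)).
Proof.
apply: (@le_integrable _ _ _ PY setT measurableT _ _ _ _ intS).
  by apply/measurable_realfun.measurable_EFinP; apply: measurable_realfun.measurable_funX; exact: meas_c.
move=> y _ /=; rewrite lee_fin !ger0_norm ?sqr_ge0 ?ip_ge0 //.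
exact: c2_le.
Qed.

Lemma L2_0 : L2set PY (fun _ => 0).
Proof.
split; first exact: measurable_cst.
under eq_integral => y _ do rewrite expr2 mulr0.
by rewrite integral0 ltry.
Qed.

Lemma Lcp_zero (HU HV : lmodType R) (tens : HU -> HV -> W) f g :
  tens f g = 0 -> Lcp IW tens PY s f g = S.
Proof.
move=> h.
have E : forall u, cp_cost IW tens PY s f g u = S.
  move=> u; rewrite /cp_cost h; apply: eq_integral => y _.
  by rewrite scaler0 subr0.
apply/le_anti/andP; split.
- rewrite -(E (fun _ => 0)); apply: ereal_inf_lbound.
  by exists (fun _ => 0) => //; exact: L2_0.
- by apply: le_ereal_inf_tmp => _ [u _ <-]; rewrite E.
Qed.

Lemma Lcp_unit (HU HV : lmodType R) (tens : HU -> HV -> W) f g t a :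
  ip IW t t = 1 -> a != 0 -> tens f g = a *: t ->
  Lcp IW tens PY s f g = (S - \int[PY]_y ((ip IW t (s y)) ^+ 2)%:E)%E.
Proof.
move=> ht ha hfg.
pose h : OY -> R := fun y => ip IW (s y) (s y) - (ip IW t (s y)) ^+ 2.
have hge : forall y, 0 <= h y by move=> y; rewrite /h subr_ge0 c2_le.
have hmeas : measurable_fun [set: OY] (EFin \o h).
  apply/measurable_realfun.measurable_EFinP; apply: measurable_realfun.measurable_funB => //.
  by apply: measurable_realfun.measurable_funX; exact: meas_c.
have cost : forall u, cp_cost IW tens PY s f g u =
   (\int[PY]_y (ip IW (s y) (s y) - 2 * (u y * a) * ip IW t (s y)
                + (u y * a) ^+ 2)%:E)%E.
  move=> u; rewrite /cp_cost hfg; apply: eq_integral => y _.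
  by rewrite scalerA ipE ht mulr1.
have lower : forall u, L2set PY u ->
    (\int[PY]_y (h y)%:E <= cp_cost IW tens PY s f g u)%E.
  move=> u [mu _]; rewrite cost; apply: ge0_le_integral => //.
  - by move=> y _; rewrite lee_fin hge.
  - apply/measurable_realfun.measurable_EFinP; apply: measurable_realfun.measurable_funD.
      apply: measurable_realfun.measurable_funB => //.
      apply: measurable_realfun.measurable_funM; last exact: meas_c.
      apply: measurable_realfun.measurable_funM; first exact: measurable_cst.
      by apply: measurable_realfun.measurable_funM => //; exact: measurable_cst.
    apply: measurable_realfun.measurable_funX.
    by apply: measurable_realfun.measurable_funM => //; exact: measurable_cst.
  - move=> y _; rewrite lee_fin /h.
    have := sqr_ge0 (u y * a - ip IW t (s y)). nra.
pose us := fun y => ip IW t (s y) / a.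
have hus : L2set PY us.
  split.
    by apply: measurable_realfun.measurable_funM; [exact: meas_c | exact: measurable_cst].
  have hi := int_c2 t ht.
  have -> : (\int[PY]_y ((us y) ^+ 2)%:E =
             \int[PY]_y ((a ^-2)%:E * ((ip IW t (s y)) ^+ 2)%:E))%E.
    apply: eq_integral => y _; rewrite -EFinM /us exprMn exprVn mulrC //.
  rewrite (integralZl measurableT hi).
  have hf := integrable_fin_num measurableT hi.
  by rewrite -(fineK hf) -EFinM ltry.
have attain : cp_cost IW tens PY s f g us = (\int[PY]_y (h y)%:E)%E.
  rewrite cost; apply: eq_integral => y _; congr EFin.
  rewrite /h /us divfK //; ring.
have -> : Lcp IW tens PY s f g = (\int[PY]_y (h y)%:E)%E.
  apply/le_anti/andP; split.
  - rewrite -attain; apply: ereal_inf_lbound; by exists us.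
  - by apply: le_ereal_inf_tmp => _ [u hu <-]; exact: lower.
rewrite /h; under eq_integral => y _ do rewrite EFinB.
exact: (integralB_EFin measurableT intS (int_c2 t ht)).
Qed.

End Meas.

Lemma fin_cancel (R : realType) (S a b : \bar R) :
  S \is a fin_num -> a \is a fin_num -> b \is a fin_num ->
  ((S - a <= S - b)%E = (b <= a)%E).
Proof.
move=> hS ha hb.
rewrite -(fineK hS) -(fineK ha) -(fineK hb) -!EFinB !lee_fin.
apply/idP/idP => h; lra.
Qed.

Theorem proposition3 (R : realType) (HU HV W : lmodType R)
  (IU : inner_space HU) (IV : inner_space HV) (IW : inner_space W)
  (tens : HU -> HV -> W)
  (htens : is_tensor_product IU IV IW tens)
  (d : measure_display) (OY : measurableType d) (PY : probability OY R)
  (s : OY -> W)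
  (hs_meas : forall w : W, measurable_fun setT (fun y => ip IW (s y) w))
  (hs_nmeas : measurable_fun setT (fun y => ip IW (s y) (s y)))
  (hs_L2 : (\int[PY]_y (ip IW (s y) (s y))%:E < +oo)%E)
  (fs : nat -> HU) (gs : nat -> HV) (k : nat)
  (f : HU) (g : HV) (hf : f != 0) (hg : g != 0) :
  is_argmin_on (fun p : HU * HV => Lcp IW tens PY s p.1 p.2)
    [set p | orth_prev IU fs k p.1 /\ orth_prev IV gs k p.2] (f, g)
  <->
  is_argmax_on (fun p : HU * HV => Mcp IW tens PY s p.1 p.2)
    [set p | unit_vec IU p.1 /\ orth_prev IU fs k p.1 /\
             unit_vec IV p.2 /\ orth_prev IV gs k p.2]
    (normalize IU f, normalize IV g).
Proof.
case: htens => hl hr hip _ _.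
have t0l : forall g', tens 0 g' = 0.
  by move=> g'; have := hl (-1) 0 0 g'; rewrite scaler0 addr0 scaleN1r addNr.
have t0r : forall f', tens f' 0 = 0.
  by move=> f'; have := hr (-1) f' 0 0; rewrite scaler0 addr0 scaleN1r addNr.
have tZl : forall a f' g', tens (a *: f') g' = a *: tens f' g'.
  by move=> a f' g'; rewrite -(addr0 (a *: f')) hl t0l addr0.
have tZr : forall a f' g', tens f' (a *: g') = a *: tens f' g'.
  by move=> a f' g'; rewrite -(addr0 (a *: g')) hr t0r addr0.
pose S := (\int[PY]_y (ip IW (s y) (s y))%:E)%E.
have hS : S \is a fin_num.
  exact: (integrable_fin_num measurableT (@intS _ _ IW _ _ PY s hs_nmeas hs_L2)).
have ipt : forall f' g', f' != 0 -> g' != 0 ->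
    ip IW (tens (normalize IU f') (normalize IV g'))
          (tens (normalize IU f') (normalize IV g')) = 1.
  by move=> f' g' hf' hg'; rewrite hip !ip_normalize // mulr1.
have Lnz : forall f' g', f' != 0 -> g' != 0 ->
    Lcp IW tens PY s f' g' =
    (S - Mcp IW tens PY s (normalize IU f') (normalize IV g'))%E.
  move=> f' g' hf' hg'.
  apply: (@Lcp_unit _ _ IW _ _ PY s hs_meas hs_nmeas hs_L2 _ _ tens f' g' _
            (inorm IU f' * inorm IV g') (ipt f' g' hf' hg')).
    by rewrite mulf_neq0 // gt_eqF // inorm_gt0.
  by rewrite -{1}(normalizeK IU f' hf') -{1}(normalizeK IV g' hg') tZl tZr scalerA.
have Mfin : forall f' g', f' != 0 -> g' != 0 ->
    Mcp IW tens PY s (normalize IU f') (normalize IV g') \is a fin_num.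
  move=> f' g' hf' hg'.
  exact: (integrable_fin_num measurableT
            (@int_c2 _ _ IW _ _ PY s hs_meas hs_nmeas hs_L2 _ (ipt f' g' hf' hg'))).
have Mge0 : forall f' g', (0 <= Mcp IW tens PY s f' g')%E.
  by move=> f' g'; apply: integral_ge0 => y _; rewrite lee_fin sqr_ge0.
have hinv : forall (V : lmodType R) (I : inner_space V) (x : V),
    x != 0 -> (inorm I x)^-1 != 0.
  by move=> V I x hx; rewrite invr_eq0 gt_eqF // inorm_gt0.
split.
- move=> [[/= hof hog] Hmin]; split.
    split; first exact: unit_normalize.
    split; first exact: orthZ.
    split; first exact: unit_normalize.
    exact: orthZ.
  move=> [f' g'] /= [uf' [of' [ug' og']]].
  have hf' := unit_neq0 IU f' uf'; have hg' := unit_neq0 IV g' ug'.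
  have := Hmin (f', g') (conj of' og').
  rewrite /= (Lnz f g hf hg) (Lnz f' g' hf' hg').
  rewrite fin_cancel ?Mfin //.
  by rewrite (normalize_unit IU f' uf') (normalize_unit IV g' ug').
- move=> [[/= uf [of1 [ug og1]]] Hmax]; split.
    split.
      exact: (orthZ_inv IU fs k _ f (hinv _ _ f hf) of1).
    exact: (orthZ_inv IV gs k _ g (hinv _ _ g hg) og1).
  move=> [f' g'] /= [of' og'].
  rewrite (Lnz f g hf hg).
  have [->|hf'] := eqVneq f' 0.
    rewrite (@Lcp_zero _ _ IW _ _ PY s _ _ tens _ _ (t0l g')).
    have := leeB (lexx S) (Mge0 (normalize IU f) (normalize IV g)).
    by rewrite sube0.
  have [->|hg'] := eqVneq g' 0.
    rewrite (@Lcp_zero _ _ IW _ _ PY s _ _ tens _ _ (t0r f')).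
    have := leeB (lexx S) (Mge0 (normalize IU f) (normalize IV g)).
    by rewrite sube0.
  rewrite (Lnz f' g' hf' hg') fin_cancel ?Mfin //.
  apply: (Hmax (normalize IU f', normalize IV g')).
  split; first exact: unit_normalize.
  split; first exact: orthZ.
  split; first exact: unit_normalize.
  exact: orthZ.
Qed.
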